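(* Let $g:\mathbb{Z}_{\ge 0}\to\mathbb{R}$ be a linearly progressing opponent process with switching time $\tau_0\ge1$ (so $g(0)>0$). Let $y_{\min}\in\mathbb{R}$, let $(y^{\mathrm{nat}}_t)_{t\ge0}$ be an arbitrary real sequence, and let gains $K_+,K_-$ satisfy $K_+\le g(0)^{-1}\le K_-$. Set $u_{-1}=0$, $y_0=y^{\mathrm{nat}}_0$, and for $t\ge0$ define $$u_t=\max\bigl\{0,\ u_{t-1}-K_+(y_t-y_{\min})_+-K_-(y_t-y_{\min})_-\bigr\},\qquad y_{t+1}=\sum_{k=0}^{t}g(k)\,u_{t-k}+y^{\mathrm{nat}}_{t+1},$$ where $(x)_+=\max(x,0)$ and $(x)_-=\min(x,0)$. Then for every $t\ge0$, $$y_{t+1}\ge y_{\min}+\bigl(y^{\mathrm{nat}}_{t+1}-y^{\mathrm{nat}}_t\bigr)-\sum_{k=1}^{t}g(k)\bigl(u_{t-k-1}-u_{t-k}\bigr).$$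
   Context: An impulse response $g:\mathbb{Z}_{\ge0}\to\mathbb{R}$ is an opponent process if there is a time $\tau_0$ with $g(\tau)>0$ for $\tau<\tau_0$ and $g(\tau)\le 0$ for $\tau\ge\tau_0$. It is a linearly progressing opponent process (LPOP) if in addition there is $\alpha\in[0,1)$ with $g(t+1)\le\alpha\,g(t)$ for all $t<\tau_0-1$ and $|g(t+1)|\ge\alpha\,|g(t)|$ for all $t\ge\tau_0$. *)

(* Defs.v *)
From mathcomp Require Import all_boot all_order all_algebra.
From mathcomp Require Import reals.
Set Implicit Arguments. Unset Strict Implicit. Unset Printing Implicit Defensive.
Import Order.TTheory GRing.Theory Num.Theory.
Local Open Scope ring_scope.

Definition opponent_process (R : realType) (g : nat -> R) (tau0 : nat) : Prop :=
  (forall tau : nat, (tau < tau0)%N -> 0 < g tau) /\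
  (forall tau : nat, (tau0 <= tau)%N -> g tau <= 0).

Definition LPOP (R : realType) (g : nat -> R) (tau0 : nat) : Prop :=
  opponent_process g tau0 /\
  exists alpha : R, 0 <= alpha /\ alpha < 1 /\
    (forall t : nat, (t.+1 < tau0)%N -> g t.+1 <= alpha * g t) /\
    (forall t : nat, (tau0 <= t)%N -> alpha * `|g t| <= `|g t.+1|).

Definition posp (R : realType) (x : R) : R := Num.max x 0.
Definition negp (R : realType) (x : R) : R := Num.min x 0.

(* extension of a sequence u_0, u_1, ... to integer indices by u_n = 0 for n < 0
   (in particular u_{-1} = 0) *)
Definition uext (R : realType) (u : nat -> R) (n : int) : R :=
  match n with Posz m => u m | Negz _ => 0 end.

(* Main.v *)
Require Import Defs.
From mathcomp Require Import all_boot all_order all_algebra.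
From mathcomp Require Import reals.
From mathcomp Require Import lra zify.
Import Order.TTheory GRing.Theory Num.Theory.
Local Open Scope ring_scope.

Lemma uextE (R : realType) (u : nat -> R) (z : int) (n : nat) :
  z = n%:Z -> uext u z = u n.
Proof. by move=> ->. Qed.

Lemma uextN (R : realType) (u : nat -> R) (z : int) :
  z < 0 -> uext u z = 0.
Proof. by case: z. Qed.

Arguments uextE {R} u {z n}.
Arguments uextN {R} u {z}.

Theorem lemma1 (R : realType) (g : nat -> R) (tau0 : nat)
  (ymin : R) (ynat : nat -> R) (Kp Km : R) (u y : nat -> R) :
  LPOP g tau0 -> (1 <= tau0)%N ->
  Kp <= (g 0%N)^-1 -> (g 0%N)^-1 <= Km ->
  y 0%N = ynat 0%N ->
  (forall t : nat, u t = Num.max 0 (uext u (t%:Z - 1)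
        - Kp * posp (y t - ymin) - Km * negp (y t - ymin))) ->
  (forall t : nat, y t.+1 = \sum_(0 <= k < t.+1) g k * u (t - k)%N + ynat t.+1) ->
  forall t : nat,
    ymin + (ynat t.+1 - ynat t)
      - \sum_(1 <= k < t.+1) g k * (uext u (t%:Z - k%:Z - 1) - uext u (t%:Z - k%:Z))
    <= y t.+1.
Proof.
move=> [[gpos _] _] tau1 hKp hKm hy0 hu hy t.
have g0 : 0 < g 0%N by apply: gpos.
have g0n : g 0%N != 0 by rewrite gt_eqF.
have keyA : ymin <= y t + g 0%N * (u t - uext u (t%:Z - 1)).
  set up := uext u (t%:Z - 1).
  set e := y t - ymin.
  have hut : up - Kp * posp e - Km * negp e <= u t.
    by rewrite hu le_max lexx orbT.
  have hK1 : g 0%N * Kp <= 1.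
    by rewrite -(mulfV g0n); apply: ler_wpM2l; [apply: ltW|].
  have hK2 : 1 <= g 0%N * Km.
    by rewrite -(mulfV g0n); apply: ler_wpM2l; [apply: ltW|].
  have ye : y t = e + ymin by rewrite /e; lra.
  rewrite ye.
  have [e0|e0] := leP 0 e.
  - have pe : posp e = e by rewrite /posp max_l.
    have ne : negp e = 0 by rewrite /negp min_r.
    rewrite pe ne in hut.
    have h1 : 0 <= g 0%N * (u t - up + Kp * e).
      by apply: mulr_ge0; [apply: ltW|lra].
    have h2 : 0 <= (1 - g 0%N * Kp) * e by apply: mulr_ge0; lra.
    nra.
  - have pe : posp e = 0 by rewrite /posp max_r // ltW.
    have ne : negp e = e by rewrite /negp min_l // ltW.
    rewrite pe ne in hut.
    have h1 : 0 <= g 0%N * (u t - up + Km * e).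
      by apply: mulr_ge0; [apply: ltW|lra].
    have h2 : 0 <= (g 0%N * Km - 1) * (- e) by apply: mulr_ge0; lra.
    nra.
have yt : y t = g 0%N * uext u (t%:Z - 1)
    + \sum_(1 <= k < t.+1) g k * uext u (t%:Z - k%:Z - 1) + ynat t.
  case: t {keyA} => [|s].
    by rewrite big_geq // hy0 (uextN u (isT : (0%:Z - 1 < 0)%R)); lra.
  rewrite hy [in RHS]big_nat_recr //= (uextN u (_ : _ < 0)); last by lia.
  rewrite [in LHS]big_ltn // subn1 /= subn0 mulr0 addr0; congr (_ + _ + _).
  apply: eq_big_nat => k /andP[k1 k2].
  rewrite (uextE u (_ : _ = (s - k)%N%:Z)) //.
  lia.
have yt1 : y t.+1 = g 0%N * u t
    + \sum_(1 <= k < t.+1) g k * uext u (t%:Z - k%:Z) + ynat t.+1.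
  rewrite hy big_ltn // subn0; congr (_ + _ + _).
  apply: eq_big_nat => k /andP[k1 k2].
  rewrite (uextE u (_ : _ = (t - k)%N%:Z)) //.
  lia.
under eq_bigr do rewrite mulrBr.
rewrite sumrB yt1.
rewrite yt in keyA.
lra.
Qed.
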